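(* Let $a,c>0$ and $z(k)=-ak^2+ik+c$ for $k\in\mathbb{R}$, and let $\sqrt{\cdot}$ denote the principal square root. Then $$\inf_{k\in\mathbb{R}}\Re\sqrt{z(k)}=\begin{cases}\sqrt{c},&4ac\le 1,\\ \frac{1}{2\sqrt a},&4ac>1,\end{cases}\qquad \sup_{k\in\mathbb{R}}\Re\sqrt{z(k)}=\begin{cases}\frac{1}{2\sqrt a},&4ac<1,\\ \sqrt{c},&4ac\ge 1.\end{cases}$$
   Context: Here $\frac{1}{2\sqrt a}=\lim_{|k|\to\infty}\Re\sqrt{z(k)}$. *)

(* Defs.v *)
From HB Require Import structures.
From mathcomp Require Import all_boot all_order all_algebra.
From mathcomp Require Import all_classical all_reals.
From mathcomp Require Import complex.
Set Implicit Arguments. Unset Strict Implicit. Unset Printing Implicit Defensive.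
Import Order.TTheory GRing.Theory Num.Theory.
Local Open Scope ring_scope.

Definition zfun (R : rcfType) (a c k : R) : R[i] :=
  - (a%:C)%C * (k%:C)%C ^+ 2 + 'i%C * (k%:C)%C + (c%:C)%C.

(* k |-> Re (principal sqrt (z k)); sqrtc is the principal square root
   (nonnegative real part, and nonnegative imaginary part on the negative axis) *)
Definition reSqrtZ (R : rcfType) (a c : R) : R -> R :=
  fun k => complex.Re (sqrtc (zfun a c k)).

(* Main.v *)
Require Import Defs.
From HB Require Import structures.
From mathcomp Require Import all_boot all_order all_algebra.
From mathcomp Require Import all_classical all_reals.
From mathcomp Require Import complex.
From mathcomp Require Import ring lra.
Import Order.TTheory GRing.Theory Num.Theory.
Local Open Scope ring_scope.
Local Open Scope classical_set_scope.
Set Implicit Arguments. Unset Strict Implicit.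

Lemma zfunE (R : rcfType) (a c k : R) : zfun a c k = Complex (c - a * k^+2) k.
Proof.
rewrite /zfun. simpc. congr (Complex _ _); ring.
Qed.

Lemma reSqrtZE (R : rcfType) (a c k : R) : reSqrtZ a c k =
  Num.sqrt ((Num.sqrt ((c - a*k^+2)^+2 + k^+2) + (c - a*k^+2)) / 2).
Proof.
rewrite /reSqrtZ zfunE /sqrtc /=. done.
Qed.

Lemma inf_eq (R : realType) (E : set R) l h : l <= h -> E h ->
  (forall x, E x -> l <= x) -> (forall y, l < y -> y < h -> E y) -> inf E = l.
Proof.
move=> lh Eh lb mid.
have hl : has_lbound E by exists l.
have ne : E !=set0 by exists h.
have H1 : l <= inf E by apply: lb_le_inf.
have H2 : inf E <= h by apply: ge_inf.
apply/eqP; rewrite eq_le H1 andbT; rewrite leNgt; apply/negP => H3.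
have Ey : E ((l + inf E)/2) by apply: mid; lra.
have := ge_inf hl Ey. lra.
Qed.

Lemma sup_eq (R : realType) (E : set R) l h : l <= h -> E l ->
  (forall x, E x -> x <= h) -> (forall y, l < y -> y < h -> E y) -> sup E = h.
Proof.
move=> lh El ub mid.
have ne : E !=set0 by exists l.
have hs : has_sup E by split => //; exists h.
have H1 : sup E <= h by apply: ge_sup.
have H2 : l <= sup E by apply: sup_upper_bound.
apply/eqP; rewrite eq_le H1 /=; rewrite leNgt; apply/negP => H3.
have Ey : E ((h + sup E)/2) by apply: mid; lra.
have := sup_upper_bound hs Ey. lra.
Qed.

Lemma m_facts (R : realType) (a : R) : 0 < a ->
  0 < 1 / (2 * Num.sqrt a) /\ 4 * a * (1 / (2 * Num.sqrt a))^+2 = 1.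
Proof.
move=> ha.
have sa0 : 0 < Num.sqrt a by rewrite sqrtr_gt0.
have saa : Num.sqrt a ^+ 2 = a by rewrite sqr_sqrtr // ltW.
split; first by rewrite divr_gt0 // mulr_gt0.
rewrite -{1}saa. field. by rewrite gt_eqF.
Qed.

Lemma bound_lemma (R : realType) (a c k : R) : 0 < a -> 0 < c ->
  0 <= reSqrtZ a c k /\
  ~ (Num.sqrt c < reSqrtZ a c k /\ 1/(2*Num.sqrt a) < reSqrtZ a c k) /\
  ~ (reSqrtZ a c k < Num.sqrt c /\ reSqrtZ a c k < 1/(2*Num.sqrt a)).
Proof.
move=> ha hc.
have [m0 mm] := m_facts ha.
move: (1 / (2 * Num.sqrt a)) m0 mm => m m0 mm.
have r0 : 0 < Num.sqrt c by rewrite sqrtr_gt0.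
have rr : Num.sqrt c ^+ 2 = c by rewrite sqr_sqrtr // ltW.
move: (Num.sqrt c) r0 rr => r r0 rr.
rewrite reSqrtZE.
have hx : exists x, x = c - a * k^+2 by exists (c - a * k^+2).
case: hx => x hx; rewrite -hx.
have k2 : 0 <= k^+2 by rewrite sqr_ge0.
have q0 : 0 <= Num.sqrt (x^+2 + k^+2) := sqrtr_ge0 _.
have qq : Num.sqrt (x^+2 + k^+2) ^+2 = x^+2 + k^+2 by rewrite sqr_sqrtr // addr_ge0 // sqr_ge0.
move: (Num.sqrt (x^+2 + k^+2)) q0 qq => q q0 qq.
have qx : x <= q by nra.
have qx' : -x <= q by nra.
have S0 : 0 <= (q + x) / 2 by lra.
have Srel : 4*((q+x)/2)*((q+x)/2-c) + k^+2*(4*a*((q+x)/2) - 1) = 0.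
  have e : 4*((q+x)/2)*((q+x)/2-c) + k^+2*(4*a*((q+x)/2) - 1) = q^+2 - (x^+2+k^+2).
    rewrite hx; field; done.
  by rewrite e qq subrr.
have [S hS] : exists S, S = (q + x)/2 by exists ((q+x)/2).
rewrite -hS in S0 Srel *.
have y0 : 0 <= Num.sqrt S := sqrtr_ge0 _.
have yy : Num.sqrt S ^+ 2 = S by rewrite sqr_sqrtr.
move: (Num.sqrt S) y0 yy => y y0 yy.
split => //; split.
- move=> [h1 h2].
  have h3 : c < S by nra.
  have h4 : 1 < 4 * a * S by nra.
  nra.
- move=> [h1 h2].
  have h3 : S < c by nra.
  have h4 : 4 * a * S < 1 by nra.
  have [k0|kn0] := eqVneq k 0.
    have k2' : k^+2 = 0 by rewrite k0 expr0n.
    have xc : x = c by rewrite hx k2' mulr0 subr0.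
    have qc : q = c by nra.
    lra.
  have kp : 0 < k^+2 by rewrite exprn_even_gt0 //.
  nra.
Qed.

Lemma attain (R : realType) (a c y : R) : 0 < a -> 0 < c -> 0 < y ->
  0 < (c - y^+2)*(4*a*y^+2 - 1) -> exists k, reSqrtZ a c k = y.
Proof.
move=> ha hc y0 P.
have [s hs] : exists s, s = y^+2 by exists (y^+2).
rewrite -hs in P.
have s0 : 0 < s by rewrite hs expr2 mulr_gt0.
have dn0 : 4*a*s - 1 != 0 by apply/eqP => d0; move: P; rewrite d0 mulr0 ltxx.
have [t ht] : exists t, t = 4*s*(c-s)/(4*a*s-1) by exists (4*s*(c-s)/(4*a*s-1)).
have htd : t * (4*a*s-1) = 4*s*(c-s) by rewrite ht; field.
have htd2 : t * (4*a*s-1)^+2 = 4*s*((c-s)*(4*a*s-1)) by rewrite ht; field.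
have t0 : 0 < t.
  have : 0 < t * (4*a*s-1)^+2 by rewrite htd2 mulr_gt0 // mulr_gt0.
  by rewrite pmulr_lgt0 // exprn_even_gt0.
exists (Num.sqrt t).
rewrite reSqrtZE sqr_sqrtr ?ltW //.
have [x hx] : exists x, x = c - a * t by exists (c - a*t).
rewrite -hx.
have q0 : 0 <= Num.sqrt (x^+2 + t) := sqrtr_ge0 _.
have qq : Num.sqrt (x^+2 + t) ^+2 = x^+2 + t by rewrite sqr_sqrtr // addr_ge0 ?sqr_ge0 ?ltW.
move: (Num.sqrt (x^+2 + t)) q0 qq => q q0 qq.
have e : (2*s - x)^+2 = x^+2 + t.
  apply/eqP; rewrite -subr_eq0.
  have -> : (2*s - x)^+2 - (x^+2 + t) = t * (4*a*s-1) - 4*s*(c-s) by rewrite hx; ring.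
  by rewrite htd subrr.
have qx : x <= q by nra.
have qe : q = 2*s - x by nra.
rewrite qe.
have -> : (2 * s - x + x) / 2 = y^+2 by rewrite hs; field.
by rewrite sqrtr_sqr gtr0_norm.
Qed.

Unset Implicit Arguments.
Theorem mainTheorem2 (R : realType) (a c : R) (ha : 0 < a) (hc : 0 < c) :
  inf (range (reSqrtZ a c)) =
    (if 4 * a * c <= 1 then Num.sqrt c else 1 / (2 * Num.sqrt a))
  /\
  sup (range (reSqrtZ a c)) =
    (if 4 * a * c < 1 then 1 / (2 * Num.sqrt a) else Num.sqrt c).
Proof.
have B := bound_lemma _ ha hc.
have A := attain ha hc.
have f0 : reSqrtZ a c 0 = Num.sqrt c.
  rewrite reSqrtZE expr0n /= mulr0 subr0 addr0 sqrtr_sqr gtr0_norm //.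
  have -> : (c + c) / 2 = c by field.
  done.
have [m0 mm] := m_facts ha.
have r0 : 0 < Num.sqrt c by rewrite sqrtr_gt0.
have rr : Num.sqrt c ^+ 2 = c by rewrite sqr_sqrtr // ltW.
move: (1 / (2 * Num.sqrt a)) m0 mm B A => m m0 mm B A.
move: (Num.sqrt c) r0 rr f0 B A => r r0 rr f0 B A.
have Er : range (reSqrtZ a c) r by exists 0.
have mid : forall y, (r < y < m \/ m < y < r) -> range (reSqrtZ a c) y.
  move=> y hy.
  have y0 : 0 < y by case: hy => /andP [h1 h2]; lra.
  have [k hk] : exists k, reSqrtZ a c k = y.
    apply: A => //.
    case: hy => /andP [h1 h2].
      have h3 : c < y^+2 by nra.
      have h4 : 4*a*y^+2 < 1 by nra.
      nra.
    have h3 : y^+2 < c by nra.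
    have h4 : 1 < 4*a*y^+2 by nra.
    nra.
  by exists k.
have [lt|eq|gt] := ltgtP (4 * a * c) 1.
- have rm : r < m.
    have h : 4*a*r^+2 < 4*a* m^+2 by rewrite rr mm.
    have h2 : r^+2 < m^+2 by nra.
    nra.
  split.
    apply: (@inf_eq _ _ r r) => //.
    + move=> x [k _ <-]; have [_ [_ H]] := B k.
      rewrite leNgt; apply/negP => h; apply: H; split => //; lra.
    + move=> y h1 h2; lra.
  apply: (@sup_eq _ _ r m) => //; first exact: ltW.
  + move=> x [k _ <-]; have [_ [H _]] := B k.
    rewrite leNgt; apply/negP => h; apply: H; split => //; lra.
  + by move=> y h1 h2; apply: mid; left; rewrite h1 h2.
- have mr : m < r.
    have h : 4*a* m^+2 < 4*a*r^+2 by rewrite rr mm.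
    have h2 : m^+2 < r^+2 by nra.
    nra.
  split.
    apply: (@inf_eq _ _ m r) => //; first exact: ltW.
    + move=> x [k _ <-]; have [_ [_ H]] := B k.
      rewrite leNgt; apply/negP => h; apply: H; split => //; lra.
    + by move=> y h1 h2; apply: mid; right; rewrite h1 h2.
  apply: (@sup_eq _ _ r r) => //.
  + move=> x [k _ <-]; have [_ [H _]] := B k.
    rewrite leNgt; apply/negP => h; apply: H; split => //; lra.
  + move=> y h1 h2; lra.
- have mr : m = r.
    have h : 4*a* m^+2 = 4*a*r^+2 by rewrite rr mm.
    have h2 : m^+2 = r^+2 by nra.
    nra.
  rewrite mr in B.
  split.
    apply: (@inf_eq _ _ r r) => //.
    + move=> x [k _ <-]; have [_ [_ H]] := B k.
      rewrite leNgt; apply/negP => h; apply: H; split => //; lra.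
    + move=> y h1 h2; lra.
  apply: (@sup_eq _ _ r r) => //.
  + move=> x [k _ <-]; have [_ [H _]] := B k.
    rewrite leNgt; apply/negP => h; apply: H; split => //; lra.
  + move=> y h1 h2; lra.
Qed.
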